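(* Let $f:2^V\to\mathbb{Z}_{\ge0}$ be a connectivity function, $W\subseteq V$, and $(C_1,C_2,C_3)$ a minimum $W$-improvement of arity 3. Then for every $i\in\{1,2,3\}$ it holds that $f(W\cup C_i)>f(W)/2$ and $f((V\setminus W)\cup C_i)>f(W)/2$.
   Context: A connectivity function $f:2^V\to\mathbb{Z}_{\ge0}$ ($V$ finite) satisfies $f(\emptyset)=0$, $f(X)=f(V\setminus X)$, and $f(X\cup Y)+f(X\cap Y)\le f(X)+f(Y)$. For $W\subseteq V$, a $W$-improvement is a tripartition $(C_1,C_2,C_3)$ of $V$ (pairwise disjoint, possibly empty, union $V$) with $f(C_i)<f(W)/2$, $f(C_i\cap W)<f(W)$, $f(C_i\cap(V\setminus W))<f(W)$ for each $i$. Its width is $\max_i f(C_i)$, its sum-width is $\sum_i f(C_i)$, and its arity is the number of nonempty $C_i$. A $W$-improvement is minimum if it has minimum width among all $W$-improvements, subject to that minimum arity, and subject to those minimum sum-width. *)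

(* Defs.v *)
From mathcomp Require Import all_boot.
Set Implicit Arguments. Unset Strict Implicit. Unset Printing Implicit Defensive.

(* V is the finite type T; subsets of V are {set T}; f : {set T} -> nat. *)
Definition connectivity_function (T : finType) (f : {set T} -> nat) : Prop :=
  [/\ f set0 = 0,
      (forall X, f X = f (~: X)) &
      (forall X Y, f (X :|: Y) + f (X :&: Y) <= f X + f Y)].

Definition tripartition (T : finType) (C : 'I_3 -> {set T}) : Prop :=
  (forall i j, i != j -> [disjoint C i & C j]) /\
  \bigcup_(i < 3) C i = [set: T].

(* f(C_i) < f(W)/2 is written 2 * f(C_i) < f(W) (exact, no rounding). *)
Definition W_improvement (T : finType) (f : {set T} -> nat) (W : {set T})
    (C : 'I_3 -> {set T}) : Prop :=
  tripartition C /\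
  forall i, [/\ 2 * f (C i) < f W, f (C i :&: W) < f W & f (C i :&: ~: W) < f W].

Definition width (T : finType) (f : {set T} -> nat) (C : 'I_3 -> {set T}) : nat :=
  \max_(i < 3) f (C i).

Definition sum_width (T : finType) (f : {set T} -> nat) (C : 'I_3 -> {set T}) : nat :=
  \sum_(i < 3) f (C i).

Definition arity (T : finType) (C : 'I_3 -> {set T}) : nat :=
  #|[set i : 'I_3 | C i != set0]|.

Definition minimum_W_improvement (T : finType) (f : {set T} -> nat) (W : {set T})
    (C : 'I_3 -> {set T}) : Prop :=
  W_improvement f W C /\
  forall D, W_improvement f W D ->
    width f C < width f D \/
    (width f C = width f D /\
      (arity C < arity D \/
       (arity C = arity D /\ sum_width f C <= sum_width f D))).

(* Main.v *)
Require Import Defs.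
From mathcomp Require Import all_boot zify.
Set Implicit Arguments. Unset Strict Implicit. Unset Printing Implicit Defensive.

Definition Dpart (T : finType) (A : {set T}) (j : 'I_3) : {set T} :=
  match val j with 0 => A | 1 => ~: A | _ => set0 end.

Lemma fT (T : finType) (f : {set T} -> nat) :
  connectivity_function f -> f setT = 0.
Proof. case=> h0 hC _; by rewrite hC setCT h0. Qed.

Lemma fdiff (T : finType) (f : {set T} -> nat) (A Y : {set T}) :
  connectivity_function f -> f (A :&: ~: Y) <= f (A :|: Y) + f Y.
Proof.
move=> hf; have [h0 hC hS] := hf.
have := hS (A :|: Y) (~: Y).
rewrite -setUA setUCr setUT (fT hf) add0n -hC.
by rewrite setIUl setICr setU0.
Qed.

Lemma Wimp_compl (T : finType) (f : {set T} -> nat) W C :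
  connectivity_function f -> W_improvement f W C -> W_improvement f (~: W) C.
Proof.
move=> [_ hC _] [tp h]; split=> // i; have [a b c] := h i.
by rewrite -hC setCK; split.
Qed.

Lemma key (T : finType) (f : {set T} -> nat) W C i :
  connectivity_function f -> W_improvement f W C ->
  2 * f (W :|: C i) <= f W -> W_improvement f W (Dpart (C i)).
Proof.
move=> hf [tp h] hle; have [h0 hC hS] := hf.
have [a b c] := h i.
split.
  split.
    move=> j k; rewrite -setI_eq0.
    case: j k => [[|[|[|j]]] Hj] // [[|[|[|k]]] Hk] //= _;
      rewrite /Dpart /= ?setICr ?setCr ?setI0 ?set0I //.
    by rewrite setIC setICr.
  rewrite !big_ord_recl big_ord0 /Dpart /= . apply/setP => x; rewrite !inE; by case: (x \in C i).
move=> [[|[|[|j]]] Hj] //; rewrite /Dpart /=.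
- rewrite -(hC (C i)); split => //.
  + have := fdiff (W) (C i) hf; rewrite setUC setIC => H.
    apply: leq_ltn_trans H _. rewrite setUC. lia.
  + rewrite -setCU hC setCK setUC; lia.
- rewrite !set0I h0; split; lia.
Qed.

Lemma Dbetter (T : finType) (f : {set T} -> nat) W C i :
  connectivity_function f -> minimum_W_improvement f W C -> arity C = 3 ->
  ~ W_improvement f W (Dpart (C i)).
Proof.
move=> hf [hW hmin] har hD.
have hw : width f (Dpart (C i)) <= width f C.
  have -> : width f (Dpart (C i)) = f (C i).
    rewrite /width !big_ord_recl big_ord0 /Dpart /=.
    have [h0 hC _] := hf; rewrite -hC h0; lia.
  exact: (@leq_bigmax _ (fun j => f (C j)) i).
have ha : arity (Dpart (C i)) < 3.
  rewrite /arity.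
  have hp : [set j | Dpart (C i) j != set0] \proper [set: 'I_3].
    rewrite properT; apply/negP => /eqP E.
    have : (@inord 2 2) \in [set: 'I_3] by rewrite inE.
    by rewrite -E inE /Dpart /= inordK // eqxx.
  by have := proper_card hp; rewrite cardsT card_ord.
case: (hmin _ hD) => [|[_ [|[]]]]; lia.
Qed.

Theorem lemma8 (T : finType) (f : {set T} -> nat) (W : {set T})
    (C : 'I_3 -> {set T}) :
  connectivity_function f ->
  minimum_W_improvement f W C ->
  arity C = 3 ->
  forall i : 'I_3,
    f W < 2 * f (W :|: C i) /\ f W < 2 * f (~: W :|: C i).
Proof.
move=> hf hm har i; have [hW _] := hm; have [_ hC _] := hf.
split; rewrite ltnNge; apply/negP => hle.
  exact: (Dbetter hf hm har (key hf hW hle)).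
have hW' := Wimp_compl hf hW.
rewrite (hC W) in hle.
have := key hf hW' hle => /(Wimp_compl hf); rewrite setCK => hD.
exact: (Dbetter hf hm har hD).
Qed.
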